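(* Let $G=\mathbb F[\mathcal A]$ be the free group on a set $\mathcal A$ and let $\Phi=(\{\mathcal I_t\},\{\phi_t\})$ be a semi-saturated partial action of $G$ on a generalized Boolean algebra $\mathcal B$. Let $C\subseteq\mathcal B$ generate $\mathcal B$ as a generalized Boolean algebra, and for each $a\in\mathcal A$ let $C_a\subseteq\mathcal I_a$ and $C_{a^{-1}}\subseteq \mathcal I_{a^{-1}}$ be covers of the generalized Boolean algebras $\mathcal I_a$ and $\mathcal I_{a^{-1}}$ respectively. Then, for any commutative unital ring $R$, $\mathrm{Lc}(R,\mathcal B)\rtimes_\Phi G$ is generated as an $R$-algebra by $$\{U\delta_e\}_{U\in C}\cup\{V\delta_a\}_{a\in\mathcal A,\,V\in C_a}\cup\{V\delta_{a^{-1}}\}_{a\in\mathcal A,\,V\in C_{a^{-1}}}.$$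
   Context: A generalized Boolean algebra is a distributive lattice $\mathcal B$ with a least element $0$ that is relatively complemented; its meet, join and relative complement are written $\wedge,\vee,\setminus$, and $x\le y$ means $x\wedge y=x$. An ideal of $\mathcal B$ is a subset $\mathcal I\subseteq\mathcal B$ such that $a\vee b\in\mathcal I$ for $a,b\in\mathcal I$ and $a\wedge b\in\mathcal I$ for $a\in\mathcal I$, $b\in\mathcal B$ (an ideal is itself a generalized Boolean algebra). A subset $C$ covers $\mathcal B$ if every $x\in\mathcal B$ satisfies $x\le s_1\vee\dots\vee s_n$ for some $s_i\in C$; $C$ generates $\mathcal B$ if $C$ is contained in no proper generalized Boolean subalgebra. A partial action $\Phi=(\{\mathcal I_t\}_{t\in G},\{\phi_t\}_{t\in G})$ of a group $G$ (identity $e$) on $\mathcal B$ consists of ideals $\mathcal I_t$ and generalized Boolean algebra isomorphisms $\phi_t:\mathcal I_{t^{-1}}\to\mathcal I_t$ with (i) $\mathcal I_e=\mathcal B$, $\phi_e=\mathrm{id}$; (ii) $\phi_s(\mathcal I_{s^{-1}}\cap\mathcal I_t)=\mathcal I_s\cap\mathcal I_{st}$; (iii) $\phi_s\phi_t(x)=\phi_{st}(x)$ for $x\in\mathcal I_{t^{-1}}\cap\mathcal I_{(st)^{-1}}$. For $G=\mathbb F[\mathcal A]$ with reduced word length $|\cdot|$, $\Phi$ is semi-saturated if $\phi_s\circ\phi_t=\phi_{st}$ whenever $|st|=|s|+|t|$ (equivalently, $\mathcal I_{st}\subseteq\mathcal I_s$ whenever $|st|=|s|+|t|$). For a commutative unital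 ring $R$, $\mathrm{Lc}(R,\mathcal B)$ is the set of functions $f:R\setminus\{0\}\to\mathcal B$ with pairwise disjoint values, almost all $0$, viewed as the function $\sum_r r\,1_{f(r)}$ (equivalently the $R$-algebra of locally constant compactly supported $R$-valued functions on the Stone dual of $\mathcal B$); $1_U$ sends $1\mapsto U$, else $0$. With $D_t=\mathrm{Lc}(R,\mathcal I_t)$, $\tilde\phi_t(f)=\phi_t\circ f$, the partial skew group ring $\mathrm{Lc}(R,\mathcal B)\rtimes_\Phi G$ consists of finite sums $\sum_t f_t\delta_t$, $f_t\in D_t$, with $(a\delta_s)(b\delta_t)=\tilde\phi_s(\tilde\phi_{s^{-1}}(a)b)\delta_{st}$. For $U\in\mathcal I_g$, $U\delta_g:=1_U\delta_g$. *)

(* Defs.v *)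
From HB Require Import structures.
From mathcomp Require Import all_boot all_order all_algebra.
From mathcomp Require Import finmap boolp classical_sets cardinality.
Set Implicit Arguments. Unset Strict Implicit. Unset Printing Implicit Defensive.
Import Order.TTheory GRing.Theory.
Local Open Scope order_scope.

(* A letter (a, false) stands for a, (a, true) for a^-1.               *)
Definition letter (A : choiceType) := (A * bool)%type.
Definition linv (A : choiceType) (x : letter A) : letter A := (x.1, ~~ x.2).

Fixpoint reduced (A : choiceType) (w : seq (letter A)) : bool :=
  match w with
  | x :: ((y :: _) as w') => (y != linv x) && reduced w'
  | _ => true
  end.

Definition push (A : choiceType) (x : letter A) (w : seq (letter A)) :=
  match w with
  | y :: w' => if y == linv x then w' else x :: w
  | [::] => [:: x]
  end.
Definition freered (A : choiceType) (w : seq (letter A)) := foldr (@push A) [::] w.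

Lemma reduced_push (A : choiceType) (x : letter A) w :
  reduced w -> reduced (push x w).
Proof.
case: w => [|y w] //= Hw.
case: eqP => [_|/eqP Hy]; last by rewrite /= Hy.
by case: w Hw => // z w /andP[].
Qed.

Lemma reduced_freered (A : choiceType) (w : seq (letter A)) : reduced (freered w).
Proof. by elim: w => //= x w IH; apply: reduced_push. Qed.

Definition FG (A : choiceType) := {w : seq (letter A) | reduced w}.

Definition fg1 (A : choiceType) : FG A := exist _ [::] isT.
Definition fgmul (A : choiceType) (s t : FG A) : FG A :=
  exist _ (freered (sval s ++ sval t)) (reduced_freered _).
Definition fginv (A : choiceType) (s : FG A) : FG A :=
  exist _ (freered (rev (map (@linv A) (sval s)))) (reduced_freered _).
Definition fglen (A : choiceType) (s : FG A) : nat := size (sval s).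
Definition fggen (A : choiceType) (a : A) : FG A := exist _ [:: (a, false)] isT.
Definition fggeninv (A : choiceType) (a : A) : FG A := exist _ [:: (a, true)] isT.

(* Generalized Boolean algebras = cbDistrLatticeType (distributive     *)
(* lattices with bottom, relatively complemented; `\` is the relative  *)
(* complement).                                                         *)

(* ideal (nonempty, hence containing 0, so that it is itself a GBA) *)
Definition gba_ideal d (B : cbDistrLatticeType d) (I : B -> Prop) : Prop :=
  I \bot /\
  (forall a b, I a -> I b -> I (a `|` b)) /\
  (forall a b, I a -> I (a `&` b)).

Definition gba_iso d (B : cbDistrLatticeType d) (I J : B -> Prop) (f : B -> B) : Prop :=
  (forall x, I x -> J (f x)) /\
  (forall x y, I x -> I y -> f x = f y -> x = y) /\
  (forall y, J y -> exists2 x, I x & f x = y) /\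
  (forall x y, I x -> I y -> f (x `&` y) = f x `&` f y) /\
  (forall x y, I x -> I y -> f (x `|` y) = f x `|` f y) /\
  (forall x y, I x -> I y -> f (x `\` y) = f x `\` f y).

(* partial action of F[A] on B: Id t = I_t, phi t = phi_t : I_{t^-1} -> I_t *)
Definition partial_action (A : choiceType) d (B : cbDistrLatticeType d)
    (Id : FG A -> B -> Prop) (phi : FG A -> B -> B) : Prop :=
  (forall t, gba_ideal (Id t)) /\
  (forall t, gba_iso (Id (fginv t)) (Id t) (phi t)) /\
  (forall x, Id (fg1 A) x) /\ (forall x, phi (fg1 A) x = x) /\
  (* (ii) phi_s(I_{s^-1} ∩ I_t) = I_s ∩ I_{st} *)
  (forall s t y, (Id s y /\ Id (fgmul s t) y) <->
                 exists x, [/\ Id (fginv s) x, Id t x & phi s x = y]) /\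
  (forall s t x, Id (fginv t) x -> Id (fginv (fgmul s t)) x ->
                 phi s (phi t x) = phi (fgmul s t) x).

(* semi-saturated: phi_s o phi_t = phi_{st} (as partial maps, i.e. same
   domain and same values) whenever |st| = |s| + |t| *)
Definition semi_saturated (A : choiceType) d (B : cbDistrLatticeType d)
    (Id : FG A -> B -> Prop) (phi : FG A -> B -> B) : Prop :=
  partial_action Id phi /\
  forall s t, fglen (fgmul s t) = (fglen s + fglen t)%N ->
    (forall x, (Id (fginv t) x /\ Id (fginv s) (phi t x)) <-> Id (fginv (fgmul s t)) x) /\
    (forall x, Id (fginv (fgmul s t)) x -> phi s (phi t x) = phi (fgmul s t) x).

Definition gba_subalg d (B : cbDistrLatticeType d) (S : B -> Prop) : Prop :=
  S \bot /\
  (forall a b, S a -> S b -> S (a `|` b)) /\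
  (forall a b, S a -> S b -> S (a `&` b)) /\
  (forall a b, S a -> S b -> S (a `\` b)).

Definition gba_generates d (B : cbDistrLatticeType d) (C : B -> Prop) : Prop :=
  forall S, gba_subalg S -> (forall x, C x -> S x) -> forall x, S x.

Definition gba_covers d (B : cbDistrLatticeType d) (I Cs : B -> Prop) : Prop :=
  forall x, I x -> exists s : seq B,
    (forall y, y \in s -> Cs y) /\ x <= \big[Order.join / \bot]_(y <- s) y.

(* Lc(R, B): functions f : R -> B (f 0 = 0, representing a function on *)
(* R \ {0}), pairwise disjoint values, almost all 0.                    *)

(* join of the family F over the indices in S (the family is meant to
   have only finitely many nonzero members in S) *)
Definition bjoin d (B : cbDistrLatticeType d) (T : choiceType)
    (S : T -> Prop) (F : T -> B) : B :=
  \big[Order.join / \bot]_(i <- fset_set (fun i => S i /\ F i <> \bot)) F i.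

Section Lc.
Local Open Scope ring_scope.

Definition lc_fun (R : comPzRingType) d (B : cbDistrLatticeType d)
    (I : B -> Prop) (f : R -> B) : Prop :=
  (f 0 = \bot)%O /\
  (forall r s, r <> s -> (f r `&` f s = \bot)%O) /\
  (forall r, I (f r)) /\
  finite_set (fun r => f r <> \bot%O).

Definition lc0 (R : comPzRingType) d (B : cbDistrLatticeType d) : R -> B :=
  fun _ => \bot%O.

Definition lc_supp (R : comPzRingType) d (B : cbDistrLatticeType d) (f : R -> B) : B :=
  bjoin (fun _ => True) f.

Definition lc_add (R : comPzRingType) d (B : cbDistrLatticeType d)
    (f g : R -> B) : R -> B :=
  fun r => if r == 0 then \bot%O else
    (bjoin (fun p : R * R => p.1 + p.2 = r) (fun p => f p.1 `&` g p.2)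
     `|` (f r `\` lc_supp g) `|` (g r `\` lc_supp f))%O.

Definition lc_mul (R : comPzRingType) d (B : cbDistrLatticeType d)
    (f g : R -> B) : R -> B :=
  fun r => if r == 0 then \bot%O else
    bjoin (fun p : R * R => p.1 * p.2 = r) (fun p => f p.1 `&` g p.2)%O.

Definition lc_scale (R : comPzRingType) d (B : cbDistrLatticeType d)
    (c : R) (f : R -> B) : R -> B :=
  fun r => if r == 0 then \bot%O else bjoin (fun s : R => c * s = r) f.

Definition lc_ind (R : comPzRingType) d (B : cbDistrLatticeType d) (U : B) : R -> B :=
  fun r => if (r == 1) && (r != 0) then U else \bot%O.

Definition lc_act (A : choiceType) (R : comPzRingType) d (B : cbDistrLatticeType d)
    (phi : FG A -> B -> B) (t : FG A) (f : R -> B) : R -> B :=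
  fun r => phi t (f r).

(* Partial skew group ring Lc(R,B) x|_Phi F[A]: an element sum_t f_t d_t *)
(* is the finitely supported family t |-> f_t with f_t in D_t.          *)
Definition skew_elem (A : choiceType) (R : comPzRingType) d (B : cbDistrLatticeType d)
    (Id : FG A -> B -> Prop) (X : FG A -> R -> B) : Prop :=
  (forall t, lc_fun (Id t) (X t)) /\ finite_set (fun t => X t <> @lc0 R d B).

Definition skew0 (A : choiceType) (R : comPzRingType) d (B : cbDistrLatticeType d)
  : FG A -> R -> B := fun _ => @lc0 R d B.

Definition skew_add (A : choiceType) (R : comPzRingType) d (B : cbDistrLatticeType d)
    (X Y : FG A -> R -> B) : FG A -> R -> B :=
  fun g => lc_add (X g) (Y g).

Definition skew_scale (A : choiceType) (R : comPzRingType) d (B : cbDistrLatticeType d)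
    (c : R) (X : FG A -> R -> B) : FG A -> R -> B :=
  fun g => lc_scale c (X g).

(* (a d_s)(b d_t) = phi~_s(phi~_{s^-1}(a) b) d_{st}, extended bilinearly *)
Definition skew_mul (A : choiceType) (R : comPzRingType) d (B : cbDistrLatticeType d)
    (phi : FG A -> B -> B) (X Y : FG A -> R -> B) : FG A -> R -> B :=
  fun g => \big[@lc_add R d B/@lc0 R d B]_(p <- fset_set
                 (fun p : FG A * FG A => [/\ fgmul p.1 p.2 = g,
                                           X p.1 <> @lc0 R d B & Y p.2 <> @lc0 R d B]))
             lc_act phi p.1 (lc_mul (lc_act phi (fginv p.1) (X p.1)) (Y p.2)).

(* U d_g := 1_U d_g *)
Definition skew_delta (A : choiceType) (R : comPzRingType) d (B : cbDistrLatticeType d)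
    (g : FG A) (U : B) : FG A -> R -> B :=
  fun h => if h == g then @lc_ind R d B U else @lc0 R d B.

Inductive gen_alg (A : choiceType) (R : comPzRingType) d (B : cbDistrLatticeType d)
    (phi : FG A -> B -> B) (S : (FG A -> R -> B) -> Prop) : (FG A -> R -> B) -> Prop :=
| gen_base X : S X -> gen_alg phi S X
| gen_zero : gen_alg phi S (@skew0 A R d B)
| gen_add X Y : gen_alg phi S X -> gen_alg phi S Y -> gen_alg phi S (skew_add X Y)
| gen_scale (c : R) X : gen_alg phi S X -> gen_alg phi S (skew_scale c X)
| gen_mul X Y : gen_alg phi S X -> gen_alg phi S Y -> gen_alg phi S (skew_mul phi X Y).

End Lc.

(* Main.v *)
Require Import Defs.
From HB Require Import structures.
From mathcomp Require Import all_boot all_order all_algebra.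
From mathcomp Require Import finmap boolp classical_sets cardinality.
Set Implicit Arguments. Unset Strict Implicit. Unset Printing Implicit Defensive.
Import Order.Theory GRing.Theory.

Section Grp.
Variable A : choiceType.
Implicit Types (x y : letter A) (w : seq (letter A)) (s t : FG A).

Lemma linvK x : linv (linv x) = x.
Proof. by case: x => a b; rewrite /linv /= negbK. Qed.

Lemma reduced_tail x w : reduced (x :: w) -> reduced w.
Proof. by case: w => //= y w /andP[]. Qed.

Lemma freered_id w : reduced w -> freered w = w.
Proof.
elim: w => // x w IH Hw /=; rewrite IH; last exact: reduced_tail Hw.
case: w Hw {IH} => //= y w /andP[Hy _]; by rewrite (negbTE Hy).
Qed.

Lemma reduced_rcons (u : seq (letter A)) y z : reduced (rcons u y) -> z != linv y ->
  reduced (rcons (rcons u y) z).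
Proof.
elim: u => [|a s IH] /=; first by move=> _ ->.
case: s IH => [|b s] IH /=.
  by move=> /andP[-> _] H; rewrite /= H.
move=> /andP[H1 H2] Hz; rewrite H1 /=.
by have := IH H2 Hz.
Qed.

Lemma reduced_rev w : reduced w -> reduced (rev (map (@linv A) w)).
Proof.
elim: w => // x w IH Hw.
rewrite map_cons rev_cons.
case: w IH Hw => [|y w] IH Hw //=.
have Hw' := reduced_tail Hw.
move: (IH Hw'); rewrite map_cons rev_cons => H.
apply: reduced_rcons => //.
move: Hw => /= /andP[Hy _].
by apply/eqP => E; move/eqP: Hy; apply; rewrite linvK in E; rewrite E.
Qed.

Lemma fgE s t : sval s = sval t -> s = t.
Proof.
case: s t => s Hs [t Ht] /= E; subst t; congr exist; exact: eq_irrelevance.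
Qed.

Lemma fginvE t : sval (fginv t) = rev (map (@linv A) (sval t)).
Proof. by rewrite /= freered_id //; apply: reduced_rev; case: t. Qed.

Lemma fginvK t : fginv (fginv t) = t.
Proof. by apply: fgE; rewrite !fginvE map_rev revK -map_comp (eq_map linvK) map_id. Qed.

Lemma fgmul1l t : fgmul (fg1 A) t = t.
Proof. by apply: fgE => /=; rewrite freered_id //; case: t. Qed.

Lemma fginv1 : fginv (fg1 A) = fg1 A.
Proof. by apply: fgE. Qed.

End Grp.
Local Open Scope order_scope.

Lemma seq_nil (T : eqType) (s : seq T) : (forall x, x \notin s) -> s = [::].
Proof. by case: s => // x s H; have := H x; rewrite inE eqxx. Qed.

Lemma seq_one (T : eqType) (s : seq T) x : uniq s ->
  (forall y, (y \in s) = (y == x)) -> s = [:: x].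
Proof.
case: s => [|y [|z s]] /= Hu H.
- by have := H x; rewrite eqxx.
- by have := H y; rewrite inE eqxx => /esym/eqP ->.
- move: Hu; have := H y; have := H z; rewrite !inE !eqxx orbT /=.
  by move=> /esym/eqP -> /esym/eqP ->; rewrite eqxx.
Qed.

Section LcLemmas.
Variables (d : Order.disp_t) (B : cbDistrLatticeType d).

Lemma bjoin_bot (T : choiceType) (S : T -> Prop) (F : T -> B) :
  (forall i, S i -> F i = \bot) -> bjoin S F = \bot.
Proof.
move=> H; rewrite /bjoin.
rewrite (_ : (fun i => S i /\ F i <> \bot) = set0); last first.
  by apply: funext => i; apply: propext; split => // -[/H]. 
rewrite fset_set0 (seq_nil (s := enum_fset fset0)) ?big_nil //.
Qed.

Lemma bjoin1 (T : choiceType) (S : T -> Prop) (F : T -> B) i0 :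
  S i0 -> (forall i, i <> i0 -> F i = \bot) -> bjoin S F = F i0.
Proof.
move=> Si0 H; case: (EM (F i0 = \bot)) => H0.
  by rewrite H0; apply: bjoin_bot => i _; case: (EM (i = i0)) => [->|/H].
rewrite /bjoin (_ : (fun i => S i /\ F i <> \bot) = [set i0]%classic); last first.
  apply: funext => i; apply: propext; split.
    by case: (EM (i = i0)) => [->|/H ->] // [].
  by move=> ->.
rewrite fset_set1 (seq_one (s := enum_fset [fset i0]%fset) (x := i0)).
- by rewrite big_cons big_nil joinx0.
- exact: fset_uniq.
- by move=> y; rewrite in_fset1.
Qed.

Lemma meet_bigjoin (T : Type) (s : seq T) (F : T -> B) x :
  (forall i, x `&` F i = \bot) -> x `&` \big[Order.join / \bot]_(i <- s) F i = \bot.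
Proof.
move=> H; elim: s => [|i s IH]; first by rewrite big_nil meetx0.
by rewrite big_cons meetUr H IH joinx0.
Qed.

Variable R : comPzRingType.
Local Notation lcB := (R -> B).

Lemma one0_all0 : (1%R : R) = 0%R -> forall r : R, r = 0%R.
Proof. by move=> H r; rewrite -(mulr1 r) H mulr0. Qed.

Lemma lc_add_disj (f g : lcB) : (forall r s, f r `&` g s = \bot) ->
  lc_add f g = fun r => if r == 0%R then \bot else f r `|` g r.
Proof.
move=> H; apply: funext => r; rewrite /lc_add; case: ifP => // _.
rewrite bjoin_bot // join0x /lc_supp.
rewrite !disj_diffl //; apply/eqP; apply: meet_bigjoin => i //.
by rewrite meetC.
Qed.

Definition lcz : lcB := @lc0 R d B.

Lemma lc_add0r (f : lcB) : f 0%R = \bot -> lc_add f lcz = f.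
Proof.
move=> H; rewrite lc_add_disj; last by move=> r s; rewrite /lcz /lc0 meetx0.
by apply: funext => r; case: eqP => [->|]; rewrite ?H // /lcz /lc0 joinx0.
Qed.

Lemma lc_add0l (f : lcB) : f 0%R = \bot -> lc_add lcz f = f.
Proof.
move=> H; rewrite lc_add_disj; last by move=> r s; rewrite /lcz /lc0 meet0x.
by apply: funext => r; case: eqP => [->|]; rewrite ?H // /lcz /lc0 join0x.
Qed.

Lemma lc_add00 : lc_add lcz lcz = lcz.
Proof. by rewrite lc_add0r. Qed.

Definition pt (c : R) (V : B) : lcB := fun r => if (r == c) && (r != 0%R) then V else \bot.

Lemma lc_ind_pt V : @lc_ind R d B V = pt 1%R V.
Proof. by []. Qed.

Lemma pt_bot c : pt c \bot = lcz.
Proof. by apply: funext => r; rewrite /pt; case: ifP. Qed.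

Lemma pt0 c V : pt c V 0%R = \bot.
Proof. by rewrite /pt eqxx andbF. Qed.

Lemma lc_scale_pt c V : lc_scale c (pt 1%R V) = pt c V.
Proof.
apply: funext => r; rewrite /lc_scale /pt; case: eqP => [->|/eqP Hr].
  by rewrite andbF.
have H1 : (1%R : R) != 0%R by apply/eqP => /one0_all0 /(_ r) /eqP; rewrite (negbTE Hr).
case: (EM (c * 1 = r)%R) => Hc.
- rewrite (@bjoin1 _ _ _ 1%R); first last.
  + by move=> i /eqP Hi; rewrite (negbTE Hi).
  + exact: Hc.
  by rewrite eqxx H1 /= -Hc mulr1 eqxx.
- rewrite bjoin_bot; last first.
    move=> s Hs; case: eqP => [Es|] //=; by subst s.
  by rewrite andbT; case: eqP => // E; subst r; rewrite mulr1 in Hc.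
Qed.

Lemma lc_scale0 c : lc_scale c lcz = lcz.
Proof. by apply: funext => r; rewrite /lc_scale; case: ifP => //; rewrite bjoin_bot. Qed.

Lemma lc_add_pt1 U W : U `&` W = \bot -> lc_add (pt 1%R U) (pt 1%R W) = pt 1%R (U `|` W).
Proof.
move=> H; rewrite lc_add_disj.
  apply: funext => r; rewrite /pt; case: eqP => [->|_]; first by rewrite andbF.
  by case: ifP; rewrite ?joinx0.
move=> r s; rewrite /pt; do 2 case: ifP => _; by rewrite ?meet0x ?meetx0.
Qed.

Lemma lc_supp_pt c V : c != 0%R -> lc_supp (pt c V) = V.
Proof.
move=> Hc; rewrite /lc_supp (@bjoin1 _ _ _ c) //; first by rewrite /pt eqxx Hc.
by move=> i /eqP Hi; rewrite /pt (negbTE Hi).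
Qed.

Lemma lc_add_diff U V : V <= U -> lc_add (pt 1%R U) (pt (-1)%R V) = pt 1%R (U `\` V).
Proof.
move=> HVU; apply: funext => r; rewrite /lc_add.
case: eqP => [->|/eqP Hr]; first by rewrite pt0.
have H1 : (1%R : R) != 0%R by apply/eqP => /one0_all0 /(_ r) /eqP; rewrite (negbTE Hr).
have Hm1 : ((-1)%R : R) != 0%R by rewrite oppr_eq0.
rewrite bjoin_bot; last first.
  move=> [p1 p2] /= Hp; rewrite /pt.
  case: (p1 =P 1%R) => [E1|] /=; last by rewrite meet0x.
  case: (p2 =P (-1)%R) => [E2|] /=; last by rewrite meetx0.
  by move: Hr; rewrite -Hp E1 E2 subrr eqxx.
rewrite join0x !lc_supp_pt // /pt Hr !andbT.
have E : V `\` U = \bot by apply/eqP; rewrite diff_eq0.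
case: (r =P 1%R) => _; case: (r =P (-1)%R) => _;
  by rewrite ?diff0x ?joinx0 ?join0x ?E ?joinx0.
Qed.

End LcLemmas.

Section Skew.
Variables (A : choiceType) (d : Order.disp_t) (B : cbDistrLatticeType d) (R : comPzRingType).
Variable phi : FG A -> B -> B.
Hypothesis phibot : forall s, phi s \bot = \bot.

Local Notation lc0B := (@lcz d B R).
Local Notation pt := (@pt d B R).

Definition dl (g : FG A) (f : R -> B) : FG A -> R -> B :=
  fun h => if h == g then f else lc0B.

Lemma delta_dl g U : @skew_delta A R d B g U = dl g (pt 1%R U).
Proof. by []. Qed.

Lemma skew_add_dl g f1 f2 : skew_add (dl g f1) (dl g f2) = dl g (lc_add f1 f2).
Proof. by apply: funext => h; rewrite /skew_add /dl; case: ifP => //; rewrite lc_add00. Qed.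

Lemma skew_scale_delta c g V :
  skew_scale c (@skew_delta A R d B g V) = dl g (pt c V).
Proof.
apply: funext => h; rewrite /skew_scale /skew_delta /dl; case: ifP => _.
  exact: lc_scale_pt.
exact: lc_scale0.
Qed.

Lemma delta_bot g : @skew_delta A R d B g \bot = @skew0 A R d B.
Proof. by rewrite delta_dl pt_bot; apply: funext => h; rewrite /dl; case: ifP. Qed.

Lemma lc_act_pt s Z : lc_act phi s (pt 1%R Z) = pt 1%R (phi s Z).
Proof. by apply: funext => r; rewrite /lc_act /pt; case: ifP. Qed.

Lemma lc_mul_pt U W : lc_mul (pt 1%R U) (pt 1%R W) = pt 1%R (U `&` W).
Proof.
apply: funext => r; rewrite /lc_mul; case: eqP => [->|/eqP Hr]; first by rewrite pt0.
have H1 : (1%R : R) != 0%R by apply/eqP => /one0_all0 /(_ r) /eqP; rewrite (negbTE Hr).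
case: (EM ((1 * 1)%R = r)) => Hc.
- rewrite (@bjoin1 _ _ _ _ _ (1%R, 1%R)); first last.
  + move=> [p1 p2] Hp /=; rewrite /pt.
    case: (p1 =P 1%R) => [E1|] /=; last by rewrite meet0x.
    case: (p2 =P 1%R) => [E2|] /=; last by rewrite meetx0.
    by subst.
  + exact: Hc.
  by rewrite /pt /= eqxx H1 -Hc mulr1 eqxx H1.
- rewrite bjoin_bot; last first.
    move=> [p1 p2] /= Hp; rewrite /pt.
    case: (p1 =P 1%R) => [E1|] /=; last by rewrite meet0x.
    case: (p2 =P 1%R) => [E2|] /=; last by rewrite meetx0.
    by subst.
  rewrite /pt Hr andbT; case: eqP => // E; by subst r; rewrite mulr1 in Hc.
Qed.


Lemma pt1_zero U : pt 1%R U = lc0B -> forall Z, pt 1%R Z = lc0B \/ U = \bot.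
Proof.
move=> H Z; case: (boolP ((1%R : R) == 0%R)) => [/eqP H1|H1].
  left; apply: funext => r; rewrite /pt /lc0B /lcz /lc0.
  by rewrite (one0_all0 H1 r) eqxx andbF.
right; have := congr1 (fun f => f 1%R) H; by rewrite /pt eqxx H1.
Qed.

Lemma seq_fset1 (T : choiceType) (x : T) : enum_fset [fset x]%fset = [:: x].
Proof. by apply: seq_one; [exact: fset_uniq | move=> y; rewrite in_fset1]. Qed.

Lemma skew_mul_delta s u U W :
  skew_mul phi (@skew_delta A R d B s U) (@skew_delta A R d B u W) =
  @skew_delta A R d B (fgmul s u) (phi s (phi (fginv s) U `&` W)).
Proof.
apply: funext => g; rewrite /skew_mul.
case: (EM (g = fgmul s u /\ pt 1%R U <> lc0B /\ pt 1%R W <> lc0B)) => [[Hg [HU HW]]|Hn].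
- rewrite (_ : (fun p => _) = [set (s, u)]%classic); last first.
    apply: funext => -[p1 p2]; apply: propext; split => /=.
      rewrite /skew_delta; case: (p1 =P s) => [->|_]; last by case=> _ [].
      by case: (p2 =P u) => [->|_] // [] _ _ [].
    case=> -> ->; split => //; rewrite /skew_delta eqxx //.
  rewrite fset_set1 seq_fset1 big_cons big_nil /= /skew_delta !eqxx.
  rewrite !lc_ind_pt lc_act_pt lc_mul_pt lc_act_pt lc_add0r ?pt0 //.
  by rewrite Hg eqxx.
- rewrite (_ : (fun p => _) = set0); last first.
    apply: funext => -[p1 p2]; apply: propext; split => //= -[E1].
    rewrite /skew_delta; case: (p1 =P s) => [E2|]; last by [].
    case: (p2 =P u) => [E3|]; last by [].
    by move=> H1 H2; apply: Hn; subst; split.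
  rewrite fset_set0 (seq_nil (s := enum_fset fset0)) ?big_nil //.
  rewrite /skew_delta; case: (g =P fgmul s u) => [Eg|] //.
  rewrite lc_ind_pt.
  have [HU|HW] : pt 1%R U = lc0B \/ pt 1%R W = lc0B.
    case: (EM (pt 1%R U = lc0B)) => [|HU]; first by left.
    case: (EM (pt 1%R W = lc0B)) => [|HW]; first by right.
    by exfalso; apply: Hn.
  + case: (pt1_zero HU (phi s (phi (fginv s) U `&` W))) => // ->.
    by rewrite phibot meet0x phibot pt_bot.
  + case: (pt1_zero HW (phi s (phi (fginv s) U `&` W))) => // ->.
    by rewrite meetx0 phibot pt_bot.
Qed.

End Skew.

Lemma fgmul_inv_letter (A : choiceType) (x : letter A) :
  fgmul (fginv (exist _ [:: x] isT)) (exist _ [:: x] isT) = fg1 A.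
Proof. by apply: fgE; rewrite /= linvK eqxx. Qed.

Lemma gen_foldr (A : choiceType) (R : comPzRingType) d (B : cbDistrLatticeType d)
    (phi : FG A -> B -> B) S (T : Type) (F : T -> FG A -> R -> B) (s : seq T) :
  (forall i, gen_alg phi S (F i)) ->
  gen_alg phi S (foldr (fun i acc => skew_add (F i) acc) (@skew0 A R d B) s).
Proof.
move=> H; elim: s => [|i s IH] /=; first exact: gen_zero.
exact: gen_add.
Qed.

Theorem mainTheorem3 (A : choiceType) (d : Order.disp_t) (B : cbDistrLatticeType d)
    (Id : FG A -> B -> Prop) (phi : FG A -> B -> B)
    (C : B -> Prop) (Cp Cm : A -> B -> Prop) (R : comPzRingType) :
  semi_saturated Id phi ->
  gba_generates C ->
  (forall a V, Cp a V -> Id (fggen a) V) ->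
  (forall a V, Cm a V -> Id (fggeninv a) V) ->
  (forall a, gba_covers (Id (fggen a)) (Cp a)) ->
  (forall a, gba_covers (Id (fggeninv a)) (Cm a)) ->
  forall X : FG A -> R -> B, skew_elem Id X ->
  gen_alg phi
    (fun Y => (exists2 U, C U & Y = @skew_delta A R d B (fg1 A) U) \/
              (exists a V, Cp a V /\ Y = @skew_delta A R d B (fggen a) V) \/
              (exists a V, Cm a V /\ Y = @skew_delta A R d B (fggeninv a) V))
    X.
Proof.
move=> [[Hideal [Hiso [He1 [He2 [Hii Hiii]]]]] Hsat] Hgen _ _ Hcovp Hcovm X HX.
set Sg := (fun Y => _ \/ _).
have phibot : forall s, phi s \bot = \bot.
  move=> s; have [_ [_ [_ [_ [_ Hd]]]]] := Hiso s.
  have H0 := (Hideal (fginv s)).1.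
  by have := Hd _ _ H0 H0; rewrite !diffxx.
have mul_e : forall g U W, skew_mul phi (@skew_delta A R d B (fg1 A) U)
     (@skew_delta A R d B g W) = skew_delta g (U `&` W).
  by move=> g U W; rewrite skew_mul_delta // fgmul1l fginv1 !He2.
have add_disj : forall g U W, U `&` W = \bot ->
    skew_add (@skew_delta A R d B g U) (@skew_delta A R d B g W) = skew_delta g (U `|` W).
  by move=> g U W H; rewrite !delta_dl skew_add_dl lc_add_pt1.
have stepA : forall U, gen_alg phi Sg (@skew_delta A R d B (fg1 A) U).
  have Hdiff : forall U W, gen_alg phi Sg (@skew_delta A R d B (fg1 A) U) ->
      gen_alg phi Sg (@skew_delta A R d B (fg1 A) W) ->
      gen_alg phi Sg (@skew_delta A R d B (fg1 A) (U `\` W)).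
    move=> U W HU HW.
    have -> : @skew_delta A R d B (fg1 A) (U `\` W) =
        skew_add (skew_delta (fg1 A) U) (skew_scale (-1)%R (skew_delta (fg1 A) (U `&` W))).
      rewrite skew_scale_delta delta_dl skew_add_dl lc_add_diff ?leIl //.
      by rewrite diffxI diffxx join0x.
    apply: gen_add => //; apply: gen_scale.
    by rewrite -mul_e; apply: gen_mul.
  apply: (Hgen (fun U => gen_alg phi Sg (@skew_delta A R d B (fg1 A) U))).
  - split; first by rewrite delta_bot //; exact: gen_zero.
    split; last split.
    + move=> U W HU HW; rewrite -diffKU -add_disj ?diffKI //.
      by apply: gen_add => //; apply: Hdiff.
    + by move=> U W HU HW; rewrite -mul_e; apply: gen_mul.
    + exact: Hdiff.
  - by move=> U HU; apply: gen_base; left; exists U.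
have stepB : forall g (Cg : B -> Prop),
    (forall y, Cg y -> gen_alg phi Sg (@skew_delta A R d B g y)) ->
    forall s V, (forall y, y \in s -> Cg y) ->
    V <= \big[Order.join / \bot]_(y <- s) y ->
    gen_alg phi Sg (@skew_delta A R d B g V).
  move=> g Cg HC; elim=> [|y s IH] V Hs Hle.
    move: Hle; rewrite big_nil lex0 => /eqP ->; rewrite delta_bot //; exact: gen_zero.
  rewrite -(joinIB y V) -add_disj; last by rewrite -meetA diffKI meetx0.
  apply: gen_add.
    rewrite -mul_e; apply: gen_mul => //; apply: HC; apply: Hs.
    by rewrite inE eqxx.
  apply: IH; first by move=> z Hz; apply: Hs; rewrite inE Hz orbT.
  by move: Hle; rewrite big_cons leBLR.
have stepG : forall (x : letter A) V, Id (exist _ [:: x] isT) V ->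
    gen_alg phi Sg (@skew_delta A R d B (exist _ [:: x] isT) V).
  move=> [a [|]] V HV.
  - have E : exist _ [:: (a, true)] isT = fggeninv a by apply: fgE.
    rewrite E in HV *; have [s [Hs Hle]] := Hcovm a V HV.
    apply: (stepB _ (Cm a)) Hs Hle => y Hy.
    by apply: gen_base; right; right; exists a, y.
  - have E : exist _ [:: (a, false)] isT = fggen a by apply: fgE.
    rewrite E in HV *; have [s [Hs Hle]] := Hcovp a V HV.
    apply: (stepB _ (Cp a)) Hs Hle => y Hy.
    by apply: gen_base; right; left; exists a, y.
have stepC : forall w (Hw : reduced w) V, Id (exist _ w Hw) V ->
    gen_alg phi Sg (@skew_delta A R d B (exist _ w Hw) V).
  elim=> [|x w IH] Hw V HV.
    have -> : exist _ [::] Hw = fg1 A by apply: fgE.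
    exact: stepA.
  set t := exist _ (x :: w) Hw.
  set t' : FG A := exist _ w (reduced_tail Hw).
  set g1 : FG A := exist _ [:: x] isT.
  have Ht : fgmul g1 t' = t by apply: fgE; have := freered_id Hw; rewrite /= (freered_id (reduced_tail Hw)).
  have Hmul : fgmul (fginv t') (fginv g1) = fginv t.
    apply: fgE; change (freered (sval (fginv t') ++ sval (fginv g1)) = sval (fginv t)); rewrite !fginvE /= freered_id; last first.
      by rewrite cats1 -rev_cons -map_cons; apply: reduced_rev.
    by rewrite cats1 -rev_cons.
  have Hlen : fglen (fgmul (fginv t') (fginv g1)) = (fglen (fginv t') + fglen (fginv g1))%N.
    by rewrite Hmul /fglen !fginvE /= !size_rev /= !size_map addn1.
  have [Hdom _] := Hsat _ _ Hlen.
  have Hg1 : Id g1 V.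
    have := (Hdom V).2; rewrite Hmul !fginvK => /(_ HV) [].
    by [].
  have [x0 [Hx1 Hx2 Hx3]] : exists x0, [/\ Id (fginv g1) x0, Id t' x0 & phi g1 x0 = V].
    by apply/Hii; split => //; rewrite Ht.
  have Hinv : phi (fginv g1) V = x0.
    rewrite -Hx3 Hiii //; first by rewrite fgmul_inv_letter He2.
    by rewrite fgmul_inv_letter fginv1.
  rewrite -Ht -Hx3 -[x0 in phi g1 x0]meetxx -{1}Hinv -skew_mul_delta //.
  apply: gen_mul; first exact: stepG.
  exact: IH.
have stepT : forall t V, Id t V -> gen_alg phi Sg (@skew_delta A R d B t V).
  by move=> [w Hw] V HV; apply: stepC.
have [HXf HXfin] := HX.
have rowT : forall t, gen_alg phi Sg (dl t (X t)).
  move=> t; have [Hf0 [Hdisj [HI Hfin]]] := HXf t.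
  have Hfold : forall s : seq R, uniq s ->
      foldr (fun r acc => skew_add (dl t (pt r (X t r))) acc) (@skew0 A R d B) s =
      dl t (fun r => if r \in s then X t r else \bot).
    elim=> [|r0 s IH] /=.
      by move=> _; apply: funext => h; rewrite /dl; case: ifP.
    move=> /andP[Hr0 Hu]; rewrite IH // skew_add_dl; congr dl.
    rewrite lc_add_disj; last first.
      move=> r r'; rewrite /pt; case: ifP => [/andP[/eqP -> _]|_]; last by rewrite meet0x.
      case: ifP => Hr' ; last by rewrite meetx0.
      apply: Hdisj => E; subst r'; by rewrite Hr' in Hr0.
    apply: funext => r; rewrite in_cons /pt.
    case: (r =P 0%R) => [->|/eqP Hr]; first by rewrite Hf0; case: ifP.
    rewrite andbT; case: (r =P r0) => [->|_] /=.
      by rewrite (negbTE Hr0) joinx0.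
    by rewrite join0x.
  set S0 := fset_set (fun r => X t r <> \bot).
  have -> : X t = (fun r => if r \in S0 then X t r else \bot).
    apply: funext => r; case: (EM (X t r = \bot)) => H; first by rewrite H; case: ifP.
    by rewrite /S0 in_fset_set // mem_set.
  rewrite -Hfold ?fset_uniq //.
  apply: gen_foldr => r.
  by rewrite -skew_scale_delta; apply: gen_scale; apply: stepT.
have HfoldT : forall s : seq (FG A), uniq s ->
    foldr (fun t acc => skew_add (dl t (X t)) acc) (@skew0 A R d B) s =
    (fun h => if h \in s then X h else @lc0 R d B).
  elim=> [|t0 s IH] /=; first by [].
  move=> /andP[Ht0 Hu]; rewrite IH //; apply: funext => h.
  rewrite /skew_add /dl in_cons; case: (h =P t0) => [->|_] /=.
    by rewrite (negbTE Ht0) lc_add0r //; have [] := HXf t0.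
  rewrite lc_add0l //; case: ifP => // _; by have [] := HXf h.
set S1 := fset_set (fun t => X t <> @lc0 R d B).
have -> : X = (fun h => if h \in S1 then X h else @lc0 R d B).
  apply: funext => h; case: (EM (X h = @lc0 R d B)) => H; first by rewrite H; case: ifP.
  by rewrite /S1 in_fset_set // mem_set.
rewrite -HfoldT ?fset_uniq //.
exact: gen_foldr.
Qed.
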